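(* Let $q\ge 2$, $n\ge 1$, $f:\mathbb{Z}_q^n\to\mathbb{R}$, let $M$ be the $q$-ary Möbius transform of $f$, and let $I^{SV}(i)$ be the Shapley value of feature $i\in D$ for the associated value function $v$. Then for every $i\in D$, $$I^{SV}(i)\;=\;-\sum_{\substack{\mathbf{k}\in\mathbb{Z}_q^n\\ k_i\neq 0}}\frac{1}{\|\mathbf{k}\|_0\, q^{\|\mathbf{k}\|_0}}\,M[\mathbf{k}].$$
   Context: Elements of $\mathbb{Z}_q^n$ are vectors $\mathbf{m}=(m_1,\dots,m_n)$ with $m_i\in\{0,1,\dots,q-1\}$. $D=\{1,\dots,n\}$, and for $T\subseteq D$, $\bar T=D\setminus T$. $\|\mathbf{k}\|_0$ is the number of nonzero coordinates of $\mathbf{k}$. Partial order: $\mathbf{m}\le\mathbf{k}$ iff for every $i$, $m_i=k_i$ or $m_i=0$; in that case $\mathbf{k}-\mathbf{m}$ is the coordinatewise integer difference. The $q$-ary Möbius transform of $f$ is $M[\mathbf{k}]=\sum_{\mathbf{m}\le\mathbf{k}}(-1)^{\|\mathbf{k}-\mathbf{m}\|_0} f(\mathbf{m})$. The value function (query encoded as the all-zeros vector, uniform marginalization of absent features) is $v_T=\frac{1}{q^{|\bar T|}}\sum_{\mathbf{r}\in\mathbb{Z}_q^n:\ \mathbf{r}_T=\mathbf{0}} f(\mathbf{r})$ for $T\subseteq D$. The Shapley value is $I^{SV}(i)=\sum_{T\subseteq D\setminus\{i\}}\frac{|T|!\,(n-|T|-1)!}{n!}\big[v_{T\cup\{i\}}-v_T\big]$.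 *)

(* Defs.v *)
From mathcomp Require Import all_boot all_order all_algebra.
Set Implicit Arguments. Unset Strict Implicit. Unset Printing Implicit Defensive.
Import Order.TTheory GRing.Theory Num.Theory.
Local Open Scope ring_scope.

Definition vecq (q n : nat) := {ffun 'I_n -> 'I_q}.

Definition nnz (q n : nat) (k : vecq q n) : nat := #|[set i | (k i : nat) != 0%N]|.

Definition vle (q n : nat) (m k : vecq q n) : bool :=
  [forall i, (m i == k i) || ((m i : nat) == 0%N)].

Definition nnz_diff (q n : nat) (k m : vecq q n) : nat :=
  #|[set i | ((k i : int) - (m i : int))%R != 0]|.

Definition mobius (R : realFieldType) (q n : nat) (f : vecq q n -> R) (k : vecq q n) : R :=
  \sum_(m : vecq q n | vle m k) (-1) ^+ (nnz_diff k m) * f m.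

(* value function v_T, uniform marginalization of absent features, query = 0 *)
Definition valfun (R : realFieldType) (q n : nat) (f : vecq q n -> R) (T : {set 'I_n}) : R :=
  (q%:R ^+ #|~: T|)^-1 *
  \sum_(r : vecq q n | [forall i in T, (r i : nat) == 0%N]) f r.

Definition shapley (R : realFieldType) (q n : nat) (f : vecq q n -> R) (i : 'I_n) : R :=
  \sum_(T : {set 'I_n} | i \notin T)
    ((#|T| `! * (n - #|T| - 1) `!)%:R / (n `!)%:R) *
    (valfun f (i |: T) - valfun f T).

(* Main.v *)
Require Import Defs.
From mathcomp Require Import all_boot all_order all_algebra.
From mathcomp Require Import zify ring.
Import Order.TTheory GRing.Theory Num.Theory.
Local Open Scope ring_scope.

Lemma weight_nat (N s : nat) : (0 < s)%N ->
  (s * \sum_(t < N.+1) 'C(N, t) * (t`! * (N + s - t - 1)`!) = (N + s)`!)%N.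
Proof.
move=> s0; elim: N => [|N IH].
  rewrite big_ord_recl big_ord0 /= addn0 bin0 subn0 mul1n fact0 mul1n add0n.
  by case: s s0 => // s _; rewrite factS subn1.
have E : (\sum_(t < N.+2) 'C(N.+1, t) * (t`! * (N.+1 + s - t - 1)`!) =
          (N + s).+1 * \sum_(t < N.+1) 'C(N, t) * (t`! * (N + s - t - 1)`!))%N.
  rewrite big_ord_recl /= bin0 fact0 subn0 mul1n.
  under eq_bigr => t _ do rewrite /bump /= add1n binS mulnDl.
  rewrite big_split /=.
  have -> : (N.+1 + s - 0 - 1 = N + s)%N by lia.
  rewrite addnA.
  have H1 : ((N + s)`! + \sum_(i < N.+1) 'C(N, i.+1) * ((i.+1)`! * (N.+1 + s - i.+1 - 1)`!)
       = \sum_(t < N.+1) 'C(N, t) * (t`! * (N + s - t)`!))%N.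
    rewrite [RHS]big_ord_recl /= bin0 fact0 subn0 mul1n mul1n; congr (_ + _)%N.
    rewrite big_ord_recr /= bin_small // mul0n addn0.
    by apply: eq_bigr => t _; rewrite /bump /= add1n; congr (_ * (_ * _`!))%N; lia.
  rewrite mul1n H1 -big_split big_distrr /=; apply: eq_bigr => t _.
  have tN : (t <= N)%N by rewrite -ltnS.
  have -> : (N.+1 + s - t.+1 - 1 = N + s - t - 1)%N by lia.
  have -> : (N + s - t = (N + s - t - 1).+1)%N by lia.
  rewrite !factS; set a := t`!; set b := (N + s - t - 1)`!.
  have -> : ((N + s - t - 1).+1 = N + s - t)%N by lia.
  nia.
by rewrite E mulnCA IH -factS addSn.
Qed.
Lemma sum_subset_card (T : finType) (A : {set T}) (F : nat -> nat) :
  (\sum_(B : {set T} | B \subset A) F #|B| = \sum_(t < #|A|.+1) 'C(#|A|, t) * F t)%N.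
Proof.
rewrite (partition_big (fun B : {set T} => (inord #|B| : 'I_#|A|.+1)) predT) //=.
apply: eq_bigr => t _.
have E : forall B : {set T}, (B \subset A) && (inord #|B| == t :> 'I_#|A|.+1) = (B \subset A) && (#|B| == t).
  move=> B; case sB: (B \subset A) => //=.
  by rewrite -val_eqE /= inordK // ltnS subset_leq_card.
rewrite (eq_bigl _ _ E).
rewrite (eq_bigr (fun _ => F t)); last by move=> B /andP[_ /eqP ->].
rewrite sum_nat_const -cards_draws; congr (_ * _)%N.
by apply: eq_card => B; rewrite inE.
Qed.

Lemma weight_sum (R : realFieldType) n (S : {set 'I_n}) : (0 < #|S|)%N ->
 \sum_(T : {set 'I_n} | T \subset ~: S)
   ((#|T|`! * (n - #|T| - 1)`!)%:R / (n`!)%:R : R) = (#|S|%:R)^-1.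
Proof.
move=> s0; rewrite -mulr_suml -natr_sum (@sum_subset_card _ _ (fun t => t`! * (n - t - 1)`!)%N).
have hn : n = (#|~: S| + #|S|)%N by rewrite addnC cardsC card_ord.
have W := @weight_nat #|~: S| #|S| s0; rewrite -hn in W.
set X := (\sum_(t < _) _)%N in W *.
have /(congr1 (fun m => m%:R : R)) W' := W; rewrite natrM in W'.
have hs : (#|S|%:R : R) != 0 by rewrite pnatr_eq0 -lt0n.
have hf : ((n`!)%:R : R) != 0 by rewrite pnatr_eq0 -lt0n fact_gt0.
have hX : (X%:R : R) != 0.
  by rewrite pnatr_eq0 -lt0n; have := fact_gt0 n; rewrite -W muln_gt0 => /andP[].
by rewrite -W'; field; rewrite hs hX.
Qed.

Section Mob.
Variables (R : realFieldType) (q n : nat) (z0 : 'I_q).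
Hypothesis Hz0 : nat_of_ord z0 = 0%N.

Lemma eq0E (x : 'I_q) : ((x : nat) == 0%N) = (x == z0).
Proof. by rewrite -val_eqE /= Hz0. Qed.

Definition C (x y : 'I_q) : R := ((x == y) || (x == z0))%:R.
Definition A (x m : 'I_q) : R :=
  if x == z0 then (m == z0)%:R else (m == x)%:R - (m == z0)%:R.

Lemma sumI (g : 'I_q -> R) z : \sum_y (y == z)%:R * g y = g z.
Proof.
rewrite (bigD1 z) //= eqxx mul1r big1 ?addr0 // => y /negbTE ->; by rewrite mul0r.
Qed.

Lemma coordA y z : \sum_x C x y * A x z = (z == y)%:R.
Proof.
rewrite /C; case: (eqVneq y z0) => [->|yz].
  under eq_bigr => x _ do rewrite orbb.
  by rewrite sumI /A eqxx.
have E x : ((x == y) || (x == z0))%:R = (x == y)%:R + (x == z0)%:R :> R.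
  by case: (eqVneq x y) => [->|_]; rewrite ?(negbTE yz) //= ?addr0 ?add0r.
under eq_bigr => x _ do rewrite E.
under eq_bigr => x _ do rewrite mulrDl.
rewrite big_split /= !sumI /A (negbTE yz) eqxx; ring.
Qed.

Lemma mobiusE (f : vecq q n -> R) (k : vecq q n) :
  mobius f k = \sum_(m : vecq q n) (\prod_j A (k j) (m j)) * f m.
Proof.
rewrite /mobius big_mkcond; apply: eq_bigr => m _.
case: ifP => H.
  congr (_ * _); rewrite (eq_bigr (fun j => (-1) ^+ (k j != m j) : R)); last first.
    move=> j _; move: H; rewrite /vle => /forallP /(_ j); rewrite eq0E /A.
    case: (eqVneq (m j) (k j)) => [->|mk] /=.
      by move=> _; case: (k j == z0); rewrite ?subr0.
    move=> mz; rewrite mz; case: eqP => [kz|_]; last by rewrite sub0r expr1.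
    by move: mk; rewrite (eqP mz) kz eqxx.
  rewrite prodrXr; congr (_ ^+ _).
  rewrite /nnz_diff -sum1_card big_mkcond /=; apply: eq_bigr => j _.
  by rewrite inE subr_eq0 eqz_nat val_eqE; case: ifP.
move: H; rewrite /vle => /negbT/forallPn [j]; rewrite negb_or => /andP[mk mz].
rewrite (bigD1 j) //= /A; rewrite eq0E in mz.
rewrite (negbTE mz) (negbTE mk); case: ifP => _; by rewrite ?subrr mul0r mul0r.
Qed.

Lemma vleP (k m : vecq q n) : (vle k m)%:R = \prod_j C (k j) (m j) :> R.
Proof.
case: (boolP (vle k m)) => H.
  by rewrite big1 // => j _; move: H; rewrite /vle => /forallP /(_ j); rewrite /C eq0E => ->.
move: H; rewrite /vle => /forallPn [j]; rewrite /C eq0E => /negbTE Hj.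
by rewrite (bigD1 j) //= Hj mul0r.
Qed.

Lemma prod_eq (m m' : vecq q n) : \prod_j ((m' j == m j)%:R : R) = (m' == m)%:R.
Proof.
case: (eqVneq m' m) => [->|H]; first by rewrite big1 // => j _; rewrite eqxx.
have [j Hj] : exists j, m' j != m j.
  apply/existsP; apply: contraR H => /existsPn H; apply/eqP/ffunP => j.
  by apply/eqP; have := H j; rewrite negbK.
by rewrite (bigD1 j) //= (negbTE Hj) mul0r.
Qed.

Lemma inv (f : vecq q n -> R) (m : vecq q n) : f m = \sum_(k | vle k m) mobius f k.
Proof.
rewrite big_mkcond /=.
have E (k : vecq q n) : (if vle k m then mobius f k else 0) =
   \sum_(m' : vecq q n) (\prod_j (C (k j) (m j) * A (k j) (m' j))) * f m'.
  transitivity ((vle k m)%:R * mobius f k); first by case: ifP; rewrite ?mul1r ?mul0r.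
  by rewrite vleP mobiusE big_distrr; apply: eq_bigr => m' _ /=; rewrite mulrA -big_split.
under eq_bigr => k _ do rewrite E.
rewrite exchange_big /=.
under eq_bigr => m' _ do rewrite -big_distrl /=.
under eq_bigr => m' _ do rewrite -(bigA_distr_bigA (fun j x => C x (m j) * A x (m' j))) /=.
under eq_bigr => m' _ do under eq_bigr => j _ do rewrite coordA.
under eq_bigr => m' _ do rewrite prod_eq.
rewrite (bigD1 m) //= eqxx mul1r big1 ?addr0 // => m' /negbTE ->; by rewrite mul0r.
Qed.

Hypothesis hq0 : (q%:R : R) != 0.

Definition h (T : {set 'I_n}) (j : 'I_n) (x : 'I_q) : R :=
  if x == z0 then 1 else if j \in T then 0 else q%:R^-1.
Definition D (T : {set 'I_n}) (j : 'I_n) (y : 'I_q) : R := ((j \in T) ==> (y == z0))%:R.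

Lemma PD (T : {set 'I_n}) (r : vecq q n) : ([forall i in T, (r i : nat) == 0%N])%:R = \prod_j D T j (r j).
Proof.
case: (boolP [forall i in T, _]) => H.
  rewrite big1 // => j _; move/forall_inP: H => H.
  by rewrite /D; case jT: (j \in T) => //=; rewrite -eq0E (H j jT).
move/forall_inPn: H => [j jT Hj].
by rewrite (bigD1 j) //= /D jT /= -eq0E (negbTE Hj) mul0r.
Qed.

Lemma qpow (T : {set 'I_n}) : (q%:R ^+ #|~: T|)^-1 = \prod_j (if j \in T then 1 else q%:R^-1) :> R.
Proof.
rewrite -exprVn -prodr_const big_mkcond /=; apply: eq_bigr => j _; rewrite inE.
by case: (j \in T).
Qed.

Lemma sumI1 z : \sum_(y : 'I_q) ((y == z)%:R : R) = 1.
Proof.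
rewrite (bigD1 z) //= eqxx big1 ?addr0 // => y /negbTE ->; by [].
Qed.

Lemma coordV (T : {set 'I_n}) (j : 'I_n) (x : 'I_q) : (if j \in T then 1 else q%:R^-1) * \sum_y D T j y * C x y = h T j x.
Proof.
rewrite /D /h /C; case: (j \in T) => /=.
  rewrite mul1r (sumI (fun y => ((x == y) || (x == z0))%:R)) orbb.
  by case: (x == z0).
under eq_bigr do rewrite mul1r.
case: (eqVneq x z0) => [->|xz].
  under eq_bigr do rewrite orbT.
  by rewrite sumr_const card_ord mulVf.
under eq_bigr do rewrite orbF eq_sym.
by rewrite sumI1 mulr1.
Qed.

Lemma valfunE (f : vecq q n -> R) (T : {set 'I_n}) :
  valfun f T = \sum_(k : vecq q n) (\prod_j h T j (k j)) * mobius f k.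
Proof.
rewrite /valfun big_mkcond /=.
have E (r : vecq q n) : (if [forall i in T, (r i : nat) == 0%N] then f r else 0) =
   \sum_(k : vecq q n) (\prod_j (D T j (r j) * C (k j) (r j))) * mobius f k.
  transitivity ([forall i in T, (r i : nat) == 0%N]%:R * f r).
    by case: ifP; rewrite ?mul1r ?mul0r.
  rewrite PD {1}(inv f r) big_distrr big_mkcond; apply: eq_bigr => k _ /=.
  transitivity ((\prod_j D T j (r j)) * ((vle k r)%:R * mobius f k)).
    by case: ifP; rewrite ?mul1r ?mul0r ?mulr0.
  by rewrite vleP mulrA -big_split.
under eq_bigr => r _ do rewrite E.
rewrite exchange_big /=.
under eq_bigr => k _ do rewrite -big_distrl /=.
under eq_bigr => k _ do rewrite -(bigA_distr_bigA (fun j y => D T j y * C (k j) y)) /=.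
rewrite big_distrr /=; apply: eq_bigr => k _.
rewrite mulrA qpow -big_split /=; congr (_ * _); apply: eq_bigr => j _.
exact: coordV.
Qed.


Definition Sk (k : vecq q n) : {set 'I_n} := [set j | (k j : nat) != 0%N].

Lemma hprod (T : {set 'I_n}) (k : vecq q n) :
  \prod_j h T j (k j) = (T \subset ~: Sk k)%:R * (q%:R ^+ nnz k)^-1.
Proof.
case: (boolP (T \subset ~: Sk k)) => H.
  rewrite mul1r -exprVn -prodr_const [RHS]big_mkcond; apply: eq_bigr => j _ /=.
  rewrite /h inE eq0E; case: (eqVneq (k j) z0) => //= kz.
  have jT : j \notin T.
    apply/negP => jT; move/subsetP: H => /(_ j jT); rewrite !inE eq0E kz.
    by [].
  by rewrite (negbTE jT).
move/subsetPn: H => [j jT]; rewrite !inE negbK eq0E => kz.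
by rewrite mul0r (bigD1 j) //= /h (negbTE kz) jT mul0r.
Qed.

Lemma hdiff (T : {set 'I_n}) (i : 'I_n) (k : vecq q n) :
  \prod_j h (i |: T) j (k j) = if k i == z0 then \prod_j h T j (k j) else 0.
Proof.
case: eqP => kz.
  apply: eq_bigr => j _; rewrite /h in_setU1.
  by case: (eqVneq j i) => [->|ji] //=; rewrite kz eqxx.
move/eqP/negbTE: kz => kz.
by rewrite (bigD1 i) //= /h setU11 kz mul0r.
Qed.

Lemma diffv (f : vecq q n -> R) (T : {set 'I_n}) (i : 'I_n) :
  valfun f (i |: T) - valfun f T =
  - \sum_(k : vecq q n | k i != z0) (\prod_j h T j (k j)) * mobius f k.
Proof.
rewrite !valfunE -sumrB -sumrN [RHS]big_mkcond; apply: eq_bigr => k _ /=.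
rewrite hdiff; case: eqP => _ /=; first by rewrite subrr.
by rewrite mul0r sub0r.
Qed.

Lemma mainS (f : vecq q n -> R) (i : 'I_n) :
  shapley f i = - \sum_(k : vecq q n | (k i : nat) != 0%N)
      ((nnz k)%:R * q%:R ^+ (nnz k))^-1 * mobius f k.
Proof.
rewrite /shapley.
under eq_bigr => T iT do rewrite diffv mulrN mulr_sumr.
rewrite sumrN; congr (- _).
rewrite exchange_big /=.
apply: eq_big => [k|k ki]; first by rewrite eq0E.
under eq_bigr => T _ do rewrite hprod !mulrA.
rewrite -!big_distrl /= invfM; congr (_ * _ * _).
have pos : (0 < #|Sk k|)%N by apply/card_gt0P; exists i; rewrite inE eq0E.
rewrite -(@weight_sum R n (Sk k) pos) big_mkcond [RHS]big_mkcond; apply: eq_bigr => T _ /=.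
case sub: (T \subset ~: Sk k); case iT: (i \in T) => /=; rewrite ?mulr1 ?mulr0 //.
by move/subsetP: sub => /(_ i iT); rewrite !inE negbK eq0E (negbTE ki).
Qed.

End Mob.

Theorem theorem1 (R : realFieldType) (q n : nat) (hq : (2 <= q)%N) (hn : (1 <= n)%N)
  (f : vecq q n -> R) (i : 'I_n) :
  shapley f i =
  - \sum_(k : vecq q n | (k i : nat) != 0%N)
      ((nnz k)%:R * q%:R ^+ (nnz k))^-1 * mobius f k.
Proof.
have q0 : (0 < q)%N by apply: leq_trans hq.
have hq0 : (q%:R : R) != 0 by rewrite pnatr_eq0 -lt0n.
exact: (@mainS R q n (Ordinal q0) erefl hq0 f i).
Qed.
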